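(* Let $D\in\mathbb{D}^n_+$, $W\in\mathbb{R}^{n\times n}$, $u\in\mathbb{R}^n$, $A:=W-D$, and $\mathcal X=\{x\in\mathbb{R}^n: Dx\in[0,1]^n\}$. (i) A point $x\in\mathcal X$ is an equilibrium of the hard-selector inclusion $x'\in-Dx+\mathcal H(Ax+u)$ (i.e. $0\in-Dx+\mathcal H(Ax+u)$) if and only if it is an equilibrium of the linear-threshold network $\dot x=-Dx+[Wx+u]_0^1$; consequently all members of the family $\dot x=\frac1\tau\left(-Dx+[Dx+\tau(Ax+u)]_0^1\right)$, $\tau>0$, the projected dynamical system $\dot x=\Pi_{\mathcal X}(x,Ax+u)$, and the hard-selector inclusion share the same equilibria in $\mathcal X$. (ii) If $A$ is Lyapunov diagonally stable, the hard-selector inclusion admits a unique equilibrium.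
   Context: $\mathbb{D}^n_+$ is the set of positive diagonal matrices; $[z]_0^1=\max(0,\min(z,1))$ elementwise. $h(z)=\{0\}$ if $z<0$, $[0,1]$ if $z=0$, $\{1\}$ if $z>0$, and $\mathcal H(x)=h(x_1)\times\cdots\times h(x_n)$. $\Pi_{\mathcal X}(x,v)$ is the Euclidean projection of $v$ onto the tangent cone of $\mathcal X$ at $x$. A matrix $M$ is Lyapunov diagonally stable if $M^\top\Lambda+\Lambda M\prec0$ for some $\Lambda\in\mathbb{D}^n_+$. *)

(* Defs.v *)
From HB Require Import structures.
From mathcomp Require Import all_boot all_order all_algebra.
From mathcomp Require Import all_classical all_reals all_analysis.
Set Implicit Arguments. Unset Strict Implicit. Unset Printing Implicit Defensive.
Import Order.TTheory GRing.Theory Num.Theory.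
Import numFieldTopology.Exports numFieldNormedType.Exports.
Local Open Scope ring_scope.
Local Open Scope classical_set_scope.

Section Defs.
Variable R : realType.
Variable n : nat.

Definition posdiag (D : 'M[R]_n) : Prop :=
  is_diag_mx D /\ (forall i, 0 < D i i).

Definition sat01 (z : R) : R := Num.max 0 (Num.min z 1).
Definition sat01v (v : 'cV[R]_n) : 'cV[R]_n := map_mx sat01 v.

Definition hsel (z : R) : set R :=
  if z < 0 then [set 0]
  else if z == 0 then [set y | 0 <= y <= 1]
  else [set 1].
Definition Hsel (x : 'cV[R]_n) : set 'cV[R]_n :=
  [set y | forall i, hsel (x i 0) (y i 0)].

Definition Xset (D : 'M[R]_n) : set 'cV[R]_n :=
  [set x | forall i, 0 <= (D *m x) i 0 <= 1].

Definition tcone (S : set 'cV[R]_n) (x : 'cV[R]_n) : set 'cV[R]_n :=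
  closure (T := 'M[R]_(n, 1))
    [set v : 'M[R]_(n, 1) | exists t : R, exists2 y, S y & 0 <= t /\ v = t *: (y - x)].

Definition sqnorm (v : 'cV[R]_n) : R := \sum_i (v i 0) ^+ 2.

Definition is_proj (K : set 'cV[R]_n) (v p : 'cV[R]_n) : Prop :=
  K p /\ (forall q, K q -> sqnorm (v - p) <= sqnorm (v - q)).

Definition PiX_zero (S : set 'cV[R]_n) (x v : 'cV[R]_n) : Prop :=
  is_proj (tcone S x) v 0.

Definition hs_equilibrium (D A : 'M[R]_n) (u x : 'cV[R]_n) : Prop :=
  exists2 y, Hsel (A *m x + u) y & 0 = - (D *m x) + y.
Definition ltn_equilibrium (D W : 'M[R]_n) (u x : 'cV[R]_n) : Prop :=
  0 = - (D *m x) + sat01v (W *m x + u).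
Definition tau_equilibrium (tau : R) (D A : 'M[R]_n) (u x : 'cV[R]_n) : Prop :=
  0 = tau^-1 *: (- (D *m x) + sat01v (D *m x + tau *: (A *m x + u))).
Definition pds_equilibrium (D A : 'M[R]_n) (u x : 'cV[R]_n) : Prop :=
  PiX_zero (Xset D) x (A *m x + u).

Definition negdef (S : 'M[R]_n) : Prop :=
  forall v : 'cV[R]_n, v != 0 -> (v^T *m S *m v) 0 0 < 0.
Definition LDS (M : 'M[R]_n) : Prop :=
  exists2 L : 'M[R]_n, posdiag L & negdef (M^T *m L + L *m M).

End Defs.

(* Main.v *)
Require Import Defs.
From HB Require Import structures.
From mathcomp Require Import all_boot all_order all_algebra.
From mathcomp Require Import all_classical all_reals all_analysis.
From mathcomp Require Import ring lra.
Import Order.TTheory GRing.Theory Num.Theory.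
Import numFieldTopology.Exports numFieldNormedType.Exports.
Set Implicit Arguments. Unset Strict Implicit. Unset Printing Implicit Defensive.
Local Open Scope ring_scope.
Local Open Scope classical_set_scope.

Section S.
Variable R : realType.

Lemma lip_cont (g : R -> R) C : 0 < C ->
  (forall a b, `|g a - g b| <= C * `|a - b|) -> continuous g.
Proof.
move=> C0 H x; apply/cvgrPdist_lt => e e0.
near=> t. rewrite (le_lt_trans (H x t)) // -ltr_pdivlMl //.
near: t; apply: cvgr_dist_lt. exact: cvg_id. by rewrite mulr_gt0 ?invr_gt0.
Unshelve. all: by end_near. Qed.

Lemma diag_mul n (D : 'M[R]_n) (x : 'cV[R]_n) i :
  is_diag_mx D -> (D *m x) i 0 = D i i * x i 0.
Proof.
move=> hD; rewrite mxE (bigD1 i) //= big1 ?addr0 // => j ji.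
by rewrite (is_diag_mxP hD i j) ?mul0r // eq_sym.
Qed.

Lemma cont_sum (T : topologicalType) (I : Type) (r : seq I) (P : pred I)
  (F : I -> T -> R) : (forall i, continuous (F i)) ->
  continuous (fun x => \sum_(i <- r | P i) F i x).
Proof.
move=> hF; elim: r => [|a r IH].
  under eq_fun do rewrite big_nil. exact: cst_continuous.
under eq_fun do rewrite big_cons.
case: (P a).
  move=> x; apply: continuousD; [exact: hF | exact: IH].
exact: IH.
Qed.

Definition compi (lo hi x z : R) :=
  lo <= x <= hi /\ (z < 0 -> x = lo) /\ (0 < z -> x = hi).

Lemma mono (lo hi : R) x1 z1 x2 z2 : compi lo hi x1 z1 -> compi lo hi x2 z2 ->
  0 <= (x1 - x2) * (z1 - z2).
Proof.
move=> [/andP[a1 b1] [n1 p1]] [/andP[a2 b2] [n2 p2]].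
have [lt|gt|->] := ltrgtP x1 x2; last by rewrite subrr mul0r.
- have hz1 : z1 <= 0 by rewrite leNgt; apply/negP => /p1 e; lra.
  have hz2 : 0 <= z2 by rewrite leNgt; apply/negP => /n2 e; lra.
  nra.
- have hz1 : 0 <= z1 by rewrite leNgt; apply/negP => /n1 e; lra.
  have hz2 : z2 <= 0 by rewrite leNgt; apply/negP => /p2 e; lra.
  nra.
Qed.

Lemma hselE (z d : R) : hsel z d <-> compi 0 1 d z.
Proof.
rewrite /hsel /compi; have [z0|z0|z0] := ltrgtP z 0.
- split; first by move=> ->; rewrite lexx ler01.
  by case=> _ [/(_ isT) -> _].
- split; first by move=> ->; rewrite lexx ler01.
  by case=> _ [_ /(_ isT) ->].
- by split; [move=> h; split | case].
Qed.

Lemma hsel_scale tau z d : 0 < tau -> (@hsel R (tau * z) d <-> @hsel R z d).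
Proof.
move=> t0; rewrite !hselE /compi pmulr_rlt0 // pmulr_rgt0 //.
Qed.

Lemma sat_eq z d : 0 <= d <= 1 -> (compi 0 1 d z <-> d = sat01 (d + z)).
Proof.
move=> /andP[d0 d1]; rewrite /compi /sat01 d0 d1 /=.
have [z0|z0|z0] := ltrgtP z 0.
- rewrite min_l; last lra.
  split.
    case=> _ [/(_ isT) -> _]; rewrite add0r max_l //; lra.
  have [h|h] := leP 0 (d+z).
    move=> e; lra.
  by move=> e; split => // ?; lra.
- rewrite max_r; last by rewrite le_min; apply/andP; split; lra.
  split.
    case=> _ [_ /(_ isT) ->]; rewrite min_r //; lra.
  have [h|h] := leP (d+z) 1.
    move=> e; lra.
  by move=> e; split => // ?; lra.
- rewrite z0 addr0 min_l // max_r //; split => // _.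
Qed.

End S.

Section Core.
Variables (R : realType) (n : nat) (M : 'M[R]_n) (q lo hi : 'cV[R]_n) (l : 'I_n -> R).
Definition qf (v : 'cV[R]_n) := \sum_i l i * v i 0 * (M *m v) i 0.
Definition zv (x : 'cV[R]_n) := M *m x + q.
Definition compx i (x : 'cV[R]_n) := compi (lo i 0) (hi i 0) (x i 0) (zv x i 0).
Hypotheses (hl : forall i, 0 < l i) (hlh : forall i, lo i 0 <= hi i 0)
  (hneg : forall v : 'cV[R]_n, v != 0 -> qf v < 0).

Lemma Mdiff x1 x2 i : (M *m (x1 - x2)) i 0 = zv x1 i 0 - zv x2 i 0.
Proof. rewrite /zv mulmxBr !mxE; lra. Qed.

Lemma key (S : {set 'I_n}) x1 x2 :
  (forall i, i \in S -> compx i x1 /\ compx i x2) ->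
  \sum_(i | i \notin S) l i * (x1 - x2) i 0 * (M *m (x1 - x2)) i 0 <= qf (x1 - x2).
Proof.
move=> hS; rewrite /qf [X in _ <= X](bigID (fun i => i \in S)) /= lerDr.
apply: sumr_ge0 => i iS; rewrite Mdiff -mulrA mulr_ge0 ?(ltW (hl i)) //.
have [h1 h2] := hS i iS; move: (mono h1 h2); rewrite !mxE; exact: id.
Qed.

Lemma core_unique x1 x2 : (forall i, compx i x1) -> (forall i, compx i x2) -> x1 = x2.
Proof.
move=> h1 h2; have := @key [set: 'I_n]%SET x1 x2 (fun i _ => conj (h1 i) (h2 i)).
rewrite big_pred0 => [|i]; last by rewrite finset.in_setT.
move=> h; apply/eqP; rewrite -subr_eq0; apply/negPn/negP => /hneg; lra.
Qed.

Lemma argmax_ex (F : 'I_n -> R) (i0 : 'I_n) : exists i, forall j, F j <= F i.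
Proof.
by case: (@arg_maxP _ R _ i0 xpredT F isT) => i _ H; exists i => j; exact: H.
Qed.


Lemma qfZ c v : qf (c *: v) = c^+2 * qf v.
Proof.
rewrite /qf mulr_sumr; apply: eq_bigr => i _; rewrite -scalemxAr !mxE; ring.
Qed.

Lemma cMc (a : R) p m' (i : 'I_p) (j : 'I_m') :
  continuous (fun r : 'M[R]_(p, m') => a * r i j).
Proof.
move=> r; apply: continuousM; [exact: cst_continuous | exact: coord_continuous].
Qed.

Lemma mu_ex : exists2 mu : R, 0 < mu &
  forall (v : 'cV[R]_n) i, (forall j, `|v j 0| <= `|v i 0|) -> qf v <= - mu * (v i 0)^+2.
Proof.
have face : forall i, exists m, m < 0 /\ forall r : 'rV[R]_n,
    (forall j, r ord0 j \in `[(if j == i then 1 else -1), 1]%R) -> qf r^T <= m.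
  move=> i.
  pose A := [set r : 'rV[R]_n | forall j,
    (fun j => `[(if j == i then 1 else -1), 1]%classic) j (r ord0 j)].
  have cA : compact A by apply: rV_compact => j; exact: segment_compact.
  have A0 : A !=set0.
    exists (\row_j (if j == i then 1 else 0)) => j /=; rewrite mxE.
    by case: eqP => _; rewrite in_itv /= ?lexx //; apply/andP; split; lra.
  have cf : continuous (fun r : 'rV[R]_n => qf r^T).
    have -> : (fun r : 'rV[R]_n => qf r^T) =
      (fun r => \sum_k (l k * r ord0 k) * \sum_j (M k j * r ord0 j)).
      apply: funext => r; rewrite /qf; apply: eq_bigr => k _; rewrite !mxE.
      by under eq_bigr => j _ do rewrite mxE.
    apply: cont_sum => k r.
    apply: (@continuousM R _ (fun x : 'rV[R]_n => l k * x ord0 k) (fun x : 'rV[R]_n => \sum_j M k j * x ord0 j)); first exact: cMc.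
    by move: r; apply: cont_sum => j; exact: cMc.
  have [c cA' cmax] := compact_EVT_max A0 cA (continuous_subspaceT cf).
  exists (qf c^T); split.
    apply: hneg; apply/negP => /eqP c0.
    move: cA'; rewrite inE => /(_ i) /=; rewrite eqxx in_itv /=.
    have -> : c ord0 i = 0 by have := congr1 (fun x : 'cV[R]_n => x i ord0) c0; rewrite !mxE.
    lra.
  move=> r hr; apply: cmax; rewrite inE => j /=; move: (hr j); exact: id.
have [m hm] := choice face.
set S := \sum_i (- m i)^-1.
have mpos i : 0 < - m i by have := (hm i).1; lra.
have S0 : 0 <= S by apply: sumr_ge0 => i _; rewrite invr_ge0 ltW.
exists (1 + S)^-1; first by rewrite invr_gt0; lra.
move=> v i hv.
have [vi0|vi0] := eqVneq (v i 0) 0.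
  have v0 : v = 0.
    apply/matrixP => a b; rewrite ord1 mxE; have := hv a.
    by rewrite vi0 normr0 normr_le0 => /eqP.
  rewrite v0 /qf big1 => [|k _]; last by rewrite !mxE mulr0 mul0r.
  by rewrite mxE expr2 !mulr0.
pose a := v i 0; pose w := a^-1 *: v.
have hw : qf w <= m i.
  rewrite -(trmxK w); apply: (hm i).2 => j; rewrite !mxE.
  case: eqP => [->|_].
    by rewrite mulVf // in_itv /= lexx.
  rewrite in_itv /= -ler_norml normrM normfV mulrC ler_pdivrMr ?normr_gt0 // mul1r.
  exact: hv.
have ev : v = a *: w by rewrite /w scalerA mulfV // scale1r.
have hyS : (- m i)^-1 <= S.
  rewrite /S (bigD1 i) //= lerDl; apply: sumr_ge0 => k _; rewrite invr_ge0 ltW //.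
have mu_le : (1 + S)^-1 <= - m i.
  rewrite -[X in _ <= X](invrK (- m i)) lef_pV2 ?posrE ?invr_gt0 //; lra.
rewrite {1}ev qfZ -/a.
have a2 : 0 <= a^+2 by exact: sqr_ge0.
rewrite [X in _ <= X]mulrC; apply: ler_wpM2l => //; lra.
Qed.


Lemma lip k : exists2 C : R, 0 < C & forall (S : {set 'I_n}) x1 x2,
  k \notin S -> (forall i, i \in S -> compx i x1 /\ compx i x2) ->
  (forall i, i \notin S -> i != k -> x1 i 0 = x2 i 0) ->
  `|(M *m (x1 - x2)) k 0| <= C * `|x1 k 0 - x2 k 0|.
Proof.
have [mu mu0 hmu] := mu_ex.
pose K := \sum_j `|M k j|.
have K0 : 0 <= K by apply: sumr_ge0 => j _.
have KL : 0 <= K^+2 * l k / mu.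
  by apply: divr_ge0; [apply: mulr_ge0; [exact: sqr_ge0 | exact: ltW] | exact: ltW].
exists (K^+2 * l k / mu + 1); first lra.
move=> S x1 x2 kS hS heq.
have hkey := key hS.
have hsum : \sum_(i | i \notin S) l i * (x1 - x2) i 0 * (M *m (x1 - x2)) i 0
    = l k * (x1 - x2) k 0 * (M *m (x1 - x2)) k 0.
  rewrite (bigD1 k) //= big1 ?addr0 // => i /andP[iS ik].
  by rewrite [(x1 - x2) i 0]mxE [(-x2) i 0]mxE heq // subrr mulr0 mul0r.
rewrite hsum in hkey.
set d := x1 - x2 in hkey *.
have [i hmax] := argmax_ex (fun j => `|d j 0|) k.
have hq := hmu d i hmax.
have hsd : x1 k 0 - x2 k 0 = d k 0 by rewrite /d !mxE.
rewrite hsd.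
set s := d k 0 in hkey *; set T := (M *m d) k 0 in hkey *.
have N2 : `|d i 0|^+2 = (d i 0)^+2 by rewrite real_normK // num_real.
set N := `|d i 0| in N2 hmax.
have N0 : 0 <= N by rewrite normr_ge0.
have hT : `|T| <= K * N.
  rewrite /T mxE; apply: le_trans (ler_norm_sum _ _ _) _; rewrite /K mulr_suml.
  by apply: ler_sum => j _; rewrite normrM; apply: ler_wpM2l => //; exact: hmax j.
have h0 : - (l k * s * T) <= l k * `|s| * `|T|.
  by have := ler_norm (- (l k * s * T)); rewrite normrN !normrM (gtr0_norm (hl k)).
have h1 : l k * `|s| * `|T| <= l k * `|s| * (K * N).
  by apply: ler_wpM2l => //; rewrite mulr_ge0 ?normr_ge0 ?ltW.
have h2 : mu * N^+2 <= l k * `|s| * (K * N) by rewrite N2; lra.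
have [NZ|NP] := eqVneq N 0.
  move: hT; rewrite NZ mulr0 => hT.
  by apply: le_trans hT _; rewrite mulr_ge0 ?normr_ge0 //; lra.
have Np : 0 < N by rewrite lt0r NP.
have h3 : mu * N <= l k * `|s| * K.
  have e1 : mu * N * N = mu * N^+2 by rewrite expr2 mulrA.
  have e2 : l k * `|s| * K * N = l k * `|s| * (K * N) by rewrite mulrA.
  by rewrite -(ler_pM2r Np) e1 e2.
have h4 : N <= mu^-1 * (l k * `|s| * K) by rewrite ler_pdivlMl.
have h5 : K * N <= K * (mu^-1 * (l k * `|s| * K)) by apply: ler_wpM2l.
apply: (le_trans hT); apply: (le_trans h5).
have -> : K * (mu^-1 * (l k * `|s| * K)) = K ^+ 2 * l k / mu * `|s|.
  by rewrite expr2; field; rewrite gt_eqF.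
rewrite ler_wpM2r ?normr_ge0 //; lra.
Qed.


Lemma exist_core k : forall (S : {set 'I_n}), #|S| = k -> forall c : 'cV[R]_n,
  exists x : 'cV[R]_n, (forall i, i \notin S -> x i 0 = c i 0) /\
                       (forall i, i \in S -> compx i x).
Proof.
elim: k => [|k IH] S hS c.
  by exists c; split => // i; rewrite (cards0_eq hS) inE.
have [k0 k0S] : exists k0, k0 \in S by apply/set0Pn; rewrite -card_gt0 hS.
set S' := S :\ k0.
have hS' : #|S'| = k by move: hS; rewrite (cardsD1 k0) k0S add1n => -[].
have k0S' : k0 \notin S' by rewrite /S' setD11.
pose ct t : 'cV[R]_n := \col_i (if i == k0 then t else c i 0).
have [X hX] := choice (fun t => IH S' hS' (ct t)).
have Xk t : X t k0 0 = t by rewrite (hX t).1 // mxE eqxx.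
pose g t := zv (X t) k0 0.
have [C C0 hC] := lip k0.
have gl : forall t1 t2, `|g t1 - g t2| <= C * `|t1 - t2|.
  move=> t1 t2; rewrite /g -Mdiff.
  have := hC S' (X t1) (X t2) k0S'; rewrite !Xk; apply.
    by move=> i iS'; split; exact: (hX _).2.
  by move=> i iS' ik; rewrite (hX t1).1 // (hX t2).1 // !mxE (negbTE ik).
have gc : continuous g := lip_cont C0 gl.
have fin : forall t, compx k0 (X t) -> exists x : 'cV[R]_n,
    (forall i, i \notin S -> x i 0 = c i 0) /\ (forall i, i \in S -> compx i x).
  move=> t hk; exists (X t); split.
  - move=> i iS; have ik : i != k0 by apply: contraNneq iS => ->.
    have iS' : i \notin S' by rewrite in_setD1 negb_and iS orbT.
    by rewrite (hX t).1 // mxE (negbTE ik).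
  - move=> i iS; have [->|ik] := eqVneq i k0; first exact: hk.
    by apply: (hX t).2; rewrite in_setD1 ik iS.
have comp_t t : lo k0 0 <= t <= hi k0 0 -> (g t < 0 -> t = lo k0 0) ->
    (0 < g t -> t = hi k0 0) -> compx k0 (X t).
  by move=> h1 h2 h3; rewrite /compx /compi Xk.
have lh := hlh k0.
have [ga|ga] := leP (g (lo k0 0)) 0.
  apply: (fin (lo k0 0)); apply: comp_t => //; first by rewrite lexx lh.
  by move=> ?; lra.
have [gb|gb] := leP 0 (g (hi k0 0)).
  apply: (fin (hi k0 0)); apply: comp_t => //; first by rewrite lexx lh.
  by move=> ?; lra.
have [|t ht gt] := @IVT R g _ _ 0 lh (continuous_subspaceT gc).
  by apply/andP; split; [rewrite ge_min; apply/orP; right; lra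
                        | rewrite le_max; apply/orP; left; lra].
apply: (fin t); apply: comp_t; first by move: ht; rewrite in_itv.
  by rewrite gt => ?; lra.
by rewrite gt => ?; lra.
Qed.

End Core.

Section Fin.
Variables (R : realType) (n : nat).

Lemma eq0E (a b : 'cV[R]_n) : (0 = - a + b) <-> (forall i, a i 0 = b i 0).
Proof.
split.
  move=> e i; have ab : a = b.
    by apply/eqP; rewrite eq_sym -subr_eq0 addrC -e.
  by rewrite ab.
move=> h; have -> : b = a by apply/matrixP => i j; rewrite ord1 h.
by rewrite addNr.
Qed.

Lemma hsE (D A : 'M[R]_n) u x : hs_equilibrium D A u x <->
  forall i, hsel ((A *m x + u) i 0) ((D *m x) i 0).
Proof.
split.
  case=> y hy /eq0E e i; rewrite e; exact: hy.
by move=> h; exists (D *m x) => //; rewrite addNr.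
Qed.

Lemma satvE (a b : 'cV[R]_n) c i : sat01v (a + c *: b) i 0 = sat01 (a i 0 + c * b i 0).
Proof. by rewrite /sat01v !mxE. Qed.

Lemma sqnormB (v q : 'cV[R]_n) :
  sqnorm (v - q) = sqnorm v - 2 * \sum_i v i 0 * q i 0 + sqnorm q.
Proof.
rewrite /sqnorm mulr_sumr -sumrB -big_split /=; apply: eq_bigr => i _; rewrite !mxE; ring.
Qed.

Lemma sqnorm_ge0 (q : 'cV[R]_n) : 0 <= sqnorm q.
Proof. by apply: sumr_ge0 => i _; exact: sqr_ge0. Qed.

Lemma sum_delta (F : 'I_n -> R) c i :
  \sum_j F j * (c *: delta_mx i 0 : 'cV[R]_n) j 0 = F i * c.
Proof.
rewrite (bigD1 i) //= big1 => [|j ji]; rewrite !mxE ?eqxx.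
  by rewrite mulr1 addr0.
by rewrite (negbTE ji) mulr0 mulr0.
Qed.

Lemma sqnorm_e (v : 'cV[R]_n) i :
  sqnorm (v - v i 0 *: delta_mx i 0) = sqnorm v - (v i 0)^+2.
Proof.
rewrite sqnormB sum_delta.
have -> : sqnorm (v i 0 *: delta_mx i 0) = (v i 0)^+2.
  rewrite /sqnorm (bigD1 i) //= big1 => [|j ji]; rewrite !mxE ?eqxx.
    by rewrite mulr1 addr0.
  by rewrite (negbTE ji) mulr0 expr2 mulr0.
rewrite expr2; ring.
Qed.

Lemma pds_iff (D A : 'M[R]_n) u x : posdiag D -> Xset D x ->
  (pds_equilibrium D A u x <-> forall i, hsel ((A *m x + u) i 0) ((D *m x) i 0)).
Proof.
move=> [hDd hDp] hX; rewrite /pds_equilibrium /PiX_zero /is_proj.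
set z := A *m x + u.
split.
- case=> _ hmin i; rewrite hselE.
  have hd := hX i.
  have key : forall e : R, 0 <= e <= 1 ->
      0 <= z i 0 / ((e - (D *m x) i 0) / D i i) -> (D *m x) i 0 != e -> z i 0 = 0.
    move=> e he hsgn hne.
    have Dn : D i i != 0 by rewrite gt_eqF.
    set a := (e - (D *m x) i 0) / D i i.
    have a0 : a != 0 by rewrite /a mulf_neq0 ?invr_eq0 // subr_eq0 eq_sym.
    set y := x + a *: delta_mx i 0.
    have yX : Xset D y.
      move=> j; rewrite diag_mul // !mxE.
      have [->|ji] := eqVneq j i.
        rewrite !eqxx mulr1.
        have -> : D i i * (x i 0 + a) = e.
          by rewrite /a (diag_mul x i hDd); field.
        exact: he.
      by rewrite andFb mulr0 addr0 -diag_mul //; exact: hX.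
    have hq : tcone (Xset D) x (z i 0 *: delta_mx i 0).
      apply: subset_closure; exists (z i 0 / a); exists y => //; split => //.
      have -> : y - x = a *: delta_mx i 0 by rewrite /y addrAC subrr add0r.
      by rewrite scalerA divfK.
    have := hmin _ hq; rewrite subr0 sqnorm_e => h.
    have : (z i 0)^+2 <= 0 by lra.
    by rewrite le_eqVlt ltNge sqr_ge0 orbF sqrf_eq0 => /eqP.
  split => //; split.
  + move=> zn; have [//|hne] := eqVneq ((D *m x) i 0) 0.
    have dp : 0 < (D *m x) i 0 / D i i.
      by rewrite divr_gt0 // lt0r hne; case/andP: hd.
    have := key 0 _ _ hne; rewrite ?lexx ?ler01 => /(_ isT).
    rewrite sub0r mulNr invrN mulrN -mulNr divr_ge0 ?ltW //; last by rewrite oppr_gt0.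
    by move=> /(_ isT) e; lra.
  + move=> zp; have [//|hne] := eqVneq ((D *m x) i 0) 1.
    have dp : 0 < (1 - (D *m x) i 0) / D i i.
      rewrite divr_gt0 // subr_gt0 lt_neqAle hne; by case/andP: hd.
    have := key 1 _ _ hne; rewrite ?lexx ?ler01 => /(_ isT).
    rewrite divr_ge0 ?ltW // => /(_ isT) e; lra.
- move=> hs; split.
    apply: subset_closure; exists 0; exists x => //; split => //.
    by rewrite scale0r.
  move=> q hq; rewrite subr0 sqnormB.
  pose f := fun q : 'cV[R]_n => \sum_i z i 0 * q i 0.
  have fc : continuous f by apply: cont_sum => i; exact: cMc.
  have sub : [set v : 'M[R]_(n, 1) | exists t : R,
      exists2 y, Xset D y & 0 <= t /\ v = t *: (y - x)] `<=`
      f @^-1` [set r : R | r <= 0].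
    move=> v [t [y yX [t0 ->]]] /=; rewrite /f.
    apply: sumr_le0 => i _.
    rewrite (_ : (t *: (y - x)) i 0 = t * (y i 0 - x i 0)); last by rewrite !mxE.
    rewrite mulrCA; apply: mulr_ge0_le0 => //.
    have := hs i; rewrite hselE => -[_ [hn hp]].
    have hy := yX i; have hxx := hX i.
    rewrite !diag_mul // in hy hxx hn hp.
    have Dp := hDp i.
    have [zn|zp|z0] := ltrgtP (z i 0) 0; last by rewrite z0 mul0r.
      have w0 : 0 <= y i 0 - x i 0.
        rewrite -(pmulr_rge0 _ Dp) mulrBr (hn zn) subr0; by case/andP: hy.
      exact: mulr_le0_ge0 (ltW zn) w0.
    have w0 : y i 0 - x i 0 <= 0.
      rewrite -(pmulr_rle0 _ Dp) mulrBr (hp zp) subr_le0; by case/andP: hy.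
    exact: mulr_ge0_le0 (ltW zp) w0.
  have cl := @preimage_closed _ _ f [set r : R | r <= 0] (fun y _ => fc y) (@closed_le _ 0).
  have hf : f q <= 0 by apply: cl; exact: (closureS sub hq).
  have := sqnorm_ge0 q; rewrite /f in hf; lra.
Qed.

End Fin.

Lemma compi_scale (R : realType) (c x z : R) : 0 < c ->
  (compi 0 c^-1 x z <-> compi 0 1 (c * x) z).
Proof.
move=> c0; have cn : c != 0 by rewrite gt_eqF.
split => -[/andP[h1 h2] [hn hp]]; split.
- apply/andP; split; first by apply: mulr_ge0 => //; exact: ltW.
  by move: h2; rewrite -[c^-1]mulr1 ler_pdivlMl.
- by split => [/hn ->|/hp ->]; rewrite ?mulr0 ?mulfV.
- apply/andP; split; first by move: h1; rewrite pmulr_rge0.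
  by rewrite -[c^-1]mulr1 ler_pdivlMl.
- split.
    move=> /hn /eqP; rewrite mulf_eq0 (negbTE cn) /= => /eqP //.
  by move=> /hp h; rewrite -(mulKf cn x) h mulr1.
Qed.

Lemma sat_tau (R : realType) (tau z d : R) : 0 < tau -> 0 <= d <= 1 ->
  (d = sat01 (d + tau * z) <-> d = sat01 (d + z)).
Proof.
move=> t0 hd; split => h.
  apply/(sat_eq _ hd); apply/hselE; apply/(hsel_scale _ _ t0); apply/hselE.
  exact/(sat_eq _ hd).
apply/(sat_eq _ hd); apply/hselE; apply/(hsel_scale _ _ t0); apply/hselE.
exact/(sat_eq _ hd).
Qed.

Lemma qform (R : realType) n (P : 'M[R]_n) (v : 'cV[R]_n) :
  (v^T *m P *m v) 0 0 = \sum_i v i 0 * (P *m v) i 0.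
Proof. by rewrite -mulmxA mxE; apply: eq_bigr => i _; rewrite mxE. Qed.

Unset Implicit Arguments.

Theorem proposition7 (R : realType) (n : nat) (D W : 'M[R]_n) (u : 'cV[R]_n) :
  posdiag D ->
  let A := W - D in
  (forall x : 'cV[R]_n, Xset D x ->
     (hs_equilibrium D A u x <-> ltn_equilibrium D W u x)
     /\ (forall tau : R, 0 < tau ->
           (tau_equilibrium tau D A u x <-> hs_equilibrium D A u x))
     /\ (pds_equilibrium D A u x <-> hs_equilibrium D A u x))
  /\ (LDS A -> exists! x : 'cV[R]_n, hs_equilibrium D A u x).
Proof.
move=> hD A; have [hDd hDp] := hD; split.
- move=> x hX; set z := A *m x + u.
  have hd i : 0 <= (D *m x) i 0 <= 1 := hX i.
  have hsI : hs_equilibrium D A u x <->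
      forall i, (D *m x) i 0 = sat01 ((D *m x) i 0 + z i 0).
    split.
      by move=> /(@hsE R n D A u x) h i; apply/(sat_eq _ (hd i)); apply/hselE; exact: h.
    move=> h; apply/(@hsE R n D A u x) => i; apply/hselE; apply/(sat_eq _ (hd i)).
    exact: h.
  split; [|split].
  + have eW : W *m x + u = D *m x + 1 *: z.
      by rewrite scale1r /z /A mulmxBl addrA [D *m x + _]addrC subrK.
    rewrite /ltn_equilibrium eW; split.
      by move=> /hsI h; apply/eq0E => i; rewrite satvE mul1r; exact: h.
    by move=> /eq0E h; apply/hsI => i; move: (h i); rewrite satvE mul1r.
  + move=> tau t0; rewrite /tau_equilibrium.
    have sc : forall V : 'cV[R]_n, (0 = tau^-1 *: V) <-> (0 = V).
      move=> V; split => [e|<-]; last by rewrite scaler0.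
      apply/eqP; rewrite eq_sym; move/eqP: e; rewrite eq_sym scaler_eq0 invr_eq0.
      by rewrite (gt_eqF t0).
    split.
      move=> /sc /eq0E h; apply/hsI => i; apply/(sat_tau _ t0 (hd i)).
      by move: (h i); rewrite satvE.
    move=> /hsI h; apply/sc; apply/eq0E => i; rewrite satvE.
    by apply/(sat_tau _ t0 (hd i)); exact: h.
  + split.
      by move=> /(@pds_iff R n D A u x hD hX) h; apply/(@hsE R n D A u x).
    by move=> /(@hsE R n D A u x) h; apply/(@pds_iff R n D A u x hD hX).
- case=> L [hLd hLp] hnegL.
  pose hiv : 'cV[R]_n := \col_i (D i i)^-1.
  pose l := fun i : 'I_n => L i i.
  have hl : forall i, 0 < l i := hLp.
  have hlh : forall i, (0 : 'cV[R]_n) i 0 <= hiv i 0.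
    by move=> i; rewrite !mxE invr_ge0 ltW.
  have tL : L^T = L.
    apply/matrixP => i j; rewrite mxE; have [->|ij] := eqVneq i j => //.
    by rewrite !(is_diag_mxP hLd) // eq_sym.
  have hneg : forall v : 'cV[R]_n, v != 0 -> qf A l v < 0.
    move=> v /hnegL.
    have -> : (v^T *m (A^T *m L + L *m A) *m v) 0 0 = 2 * qf A l v.
      have addE : forall P Q : 'M[R]_1, (P + Q) 0 0 = P 0 0 + Q 0 0 by move=> P Q; rewrite mxE.
      have trE : forall P : 'M[R]_1, P^T 0 0 = P 0 0 by move=> P; rewrite mxE.
      rewrite mulmxDr mulmxDl addE.
      have -> : v^T *m (A^T *m L) *m v = (v^T *m (L *m A) *m v)^T.
        by rewrite !trmx_mul trmxK tL !mulmxA.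
      rewrite trE qform /qf mulr2n mulrDl mul1r; congr (_ + _);
        apply: eq_bigr => i _; rewrite -mulmxA diag_mul // /l; ring.
    by rewrite pmulr_rlt0.
  have hsx : forall y, hs_equilibrium D A u y <-> forall i, compx A u 0 hiv i y.
    move=> y; split.
      move=> /(@hsE R n D A u y) h i; rewrite /compx /zv [(0 : 'cV[R]_n) i 0]mxE.
      rewrite [hiv i 0]mxE; apply/(compi_scale _ _ (hDp i)); rewrite -diag_mul //.
      by apply/hselE; exact: h.
    move=> h; apply/(@hsE R n D A u y) => i; apply/hselE; rewrite diag_mul //.
    apply/(compi_scale _ _ (hDp i)); move: (h i).
    by rewrite /compx /zv [(0 : 'cV[R]_n) i 0]mxE [hiv i 0]mxE.
  have [x [_ hx]] := @exist_core R n A u 0 hiv l hl hlh hneg _ [set: 'I_n]%SET erefl 0.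
  have hx' : forall i, compx A u 0 hiv i x.
    by move=> i; apply: hx; rewrite finset.in_setT.
  exists x; split; first exact/hsx.
  move=> x' /hsx hx2; exact: (core_unique hl hneg hx' hx2).
Qed.
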